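(* Let $q>1$. For all $m\in\mathbb{N}\cup\{0\}$, $n\in\mathbb{N}$ and $z\in\mathbb{C}$, \[U_{n,q}(e_{m+1};z)=\frac{q^m z(1-z)}{[n+m]_q}D_qU_{n,q}(e_m;z)+\frac{q^m[n]_qz+[m]_q}{[n+m]_q}U_{n,q}(e_m;z).\]
   Context: For an integer $n\ge 0$ and $p>0$: $[n]_p=1+p+\dots+p^{n-1}$ ($[0]_p=0$), $[n]_p!=[1]_p\cdots[n]_p$ ($[0]_p!=1$), $\left[\begin{smallmatrix}n\\k\end{smallmatrix}\right]_p=\frac{[n]_p!}{[k]_p![n-k]_p!}$. For $z\in\mathbb{C}$, $(1-z)_p^n=\prod_{s=0}^{n-1}(1-p^s z)$ and $p_{n,k}(p;z)=\left[\begin{smallmatrix}n\\k\end{smallmatrix}\right]_p z^k(1-z)_p^{n-k}$. For $0<p<1$, $\int_0^1 g(t)\,d_pt=(1-p)\sum_{j=0}^\infty g(p^j)p^j$. For $q>1$, $n\in\mathbb{N}$ and $f:[0,1]\to\mathbb{C}$, \[U_{n,q}(f;z)=f(0)p_{n,0}(q;z)+f(1)p_{n,n}(q;z)+[n-1]_{q^{-1}}\sum_{k=1}^{n-1}q^{k-1}p_{n,k}(q;z)\int_0^1 p_{n-2,k-1}(q^{-1};q^{-1}t)\,f(q^{k-n}t)\,d_{q^{-1}}t\] (sum empty for $n=1$). $e_m(t)=t^m$. $D_qg(z)=\frac{g(qz)-g(z)}{(q-1)z}$ for $z\neq0$ and $D_qg(0)=g'(0)$. *)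

(* Defs.v *)
From Stdlib Require Import Reals ClassicalDescription ClassicalEpsilon.
From Coquelicot Require Import Coquelicot.
Open Scope R_scope.

Fixpoint qint (n : nat) (p : R) : R :=
  match n with O => 0 | S k => qint k p + p ^ k end.

Fixpoint qfact (n : nat) (p : R) : R :=
  match n with O => 1 | S k => qfact k p * qint (S k) p end.

(* Gaussian binomial [n k]_p  (only used with k <= n) *)
Definition qbinom (n k : nat) (p : R) : R :=
  qfact n p / (qfact k p * qfact (n - k) p).

Fixpoint cpow (z : C) (n : nat) : C :=
  match n with O => RtoC 1 | S k => Cmult (cpow z k) z end.

Fixpoint qpoch (z : C) (p : R) (n : nat) : C :=
  match n with
  | O => RtoC 1
  | S k => Cmult (qpoch z p k) (Cminus (RtoC 1) (Cmult (RtoC (p ^ k)) z))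
  end.

Definition pnk (n k : nat) (p : R) (z : C) : C :=
  Cmult (Cmult (RtoC (qbinom n k p)) (cpow z k)) (qpoch z p (n - k)).

(* Jackson q-integral on [0,1] for 0 < p < 1 of a complex-valued function:
   (1-p) * sum_{j>=0} g(p^j) p^j, taken componentwise (real/imag parts). *)
Definition qintegral01 (p : R) (g : R -> C) : C :=
  Cmult (RtoC (1 - p))
    (Series (fun j => Re (g (p ^ j)) * p ^ j),
     Series (fun j => Im (g (p ^ j)) * p ^ j)).

Definition Unq (n : nat) (q : R) (f : R -> C) (z : C) : C :=
  Cplus (Cplus (Cmult (f 0) (pnk n 0 q z)) (Cmult (f 1) (pnk n n q z)))
   (Cmult (RtoC (qint (n - 1) (/ q)))
     (sum_n_m (fun k =>
        Cmult (Cmult (RtoC (q ^ (k - 1))) (pnk n k q z))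
          (qintegral01 (/ q)
             (fun t => Cmult (pnk (n - 2) (k - 1) (/ q) (RtoC (/ q * t)))
                             (f (powerRZ q (Z.of_nat k - Z.of_nat n)%Z * t)))))
        1 (n - 1))).

Definition em (m : nat) : R -> C := fun t => RtoC (t ^ m).

(* complex derivative at a point (chosen value; unique when it exists) *)
Definition cderiv (g : C -> C) (z : C) : C :=
  epsilon (inhabits (RtoC 0))
    (fun l => @is_derive C_AbsRing C_NormedModule g z l).

Definition Dq (q : R) (g : C -> C) (z : C) : C :=
  if excluded_middle_informative (z = RtoC 0) then cderiv g (RtoC 0)
  else Cdiv (Cminus (g (Cmult (RtoC q) z)) (g z)) (Cmult (RtoC (q - 1)) z).

(* Main.v *)
Require Import Defs.
From Stdlib Require Import Reals Lra Lia.
From Coquelicot Require Import Coquelicot.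
Open Scope R_scope.

Section RealPart.
Variable p : R.
Hypothesis hp0 : 0 < p.
Hypothesis hp1 : p < 1.

Fixpoint rp (b : nat) (t : R) : R :=
  match b with O => 1 | S k => rp k t * (1 - p ^ (S k) * t) end.

Lemma rp_bound b t : 0 <= t <= 1 -> 0 <= rp b t <= 1.
Proof.
  intros Ht. induction b as [|b IH]; simpl; [lra|].
  assert (0 <= p * p ^ b <= 1).
  { change (p * p ^ b) with (p ^ S b).
    destruct (pow_lt_1_compat p (S b)) as [? ?]; [lra|lia|lra]. }
  assert (0 <= p * p ^ b * t <= 1) by nra.
  nra.
Qed.

Lemma rp_shift b x : rp (S b) x = (1 - p * x) * rp b (p * x).
Proof.
  induction b as [|b IH].
  - simpl; ring.
  - change (rp (S (S b)) x) with (rp (S b) x * (1 - p ^ (S (S b)) * x)).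
    rewrite IH. simpl. ring.
Qed.

Lemma pow01 x c : 0 <= x <= 1 -> 0 <= x ^ c <= 1.
Proof. intros H; induction c; simpl; nra. Qed.

Definition term (c b j : nat) : R := (p ^ j) ^ c * rp b (p ^ j) * p ^ j.
Definition J (c b : nat) : R := Series (term c b).

Lemma pj_bound j : 0 <= p ^ j <= 1.
Proof.
  destruct j. simpl; lra.
  destruct (pow_lt_1_compat p (S j)) as [? ?]; [lra|lia|lra].
Qed.

Lemma ex_term c b : ex_series (term c b).
Proof.
  apply (@ex_series_le R_AbsRing R_CompleteNormedModule _ (fun j => p ^ j)).
  - intros j. unfold term. change norm with Rabs; simpl.
    destruct (pj_bound j) as [h1 h2].
    destruct (rp_bound b (p ^ j)) as [h3 h4]; [lra|].
    assert (0 <= (p ^ j) ^ c <= 1).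
    { apply pow01; lra. }
    rewrite Rabs_pos_eq.
    + assert (0 <= (p ^ j) ^ c * rp b (p ^ j) <= 1) by nra. nra.
    + apply Rmult_le_pos; [apply Rmult_le_pos|]; lra.
  - apply ex_series_geom. rewrite Rabs_pos_eq; lra.
Qed.

Lemma R2 c b : J c (S b) = J c b - p ^ (S b) * J (S c) b.
Proof.
  unfold J. rewrite <- Series_scal_l, <- Series_minus.
  - apply Series_ext. intros j. unfold term. simpl. ring.
  - apply ex_term.
  - exact (ex_series_scal_l (K:=R_AbsRing) (V:=R_NormedModule) (p ^ S b) _ (ex_term (S c) b)).
Qed.

Lemma R1 c b : p ^ (S c) * J c (S b) = J c b - J (S c) b.
Proof.
  unfold J. rewrite <- Series_scal_l, <- Series_minus by apply ex_term.
  rewrite (Series_incr_1_aux (fun j => term c b j - term (S c) b j)).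
  - apply Series_ext. intros j. unfold term. rewrite rp_shift.
    simpl. rewrite !Rpow_mult_distr. ring.
  - unfold term. simpl. rewrite pow1. ring.
Qed.

Lemma Jrec c b : J c (S b) * (1 - p ^ (S b) * p ^ (S c)) = (1 - p ^ (S b)) * J c b.
Proof.
  pose proof (R1 c b). pose proof (R2 c b). nra.
Qed.

Lemma J0 c : J c 0 = / (1 - p ^ (S c)).
Proof.
  unfold J. rewrite <- Series_geom.
  - apply Series_ext. intros j. unfold term. simpl rp.
    rewrite Rmult_1_r, <- !pow_mult, <- pow_add.
    replace (j * c + j)%nat with (S c * j)%nat by lia. rewrite pow_mult. ring.
  - destruct (pow_lt_1_compat p (S c)) as [? ?]; [lra|lia|]. rewrite Rabs_pos_eq; lra.
Qed.

Lemma plt1 k : (0 < k)%nat -> 0 <= p ^ k < 1.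
Proof. intros; apply pow_lt_1_compat; [lra|lia]. Qed.

Lemma Jratio c b : J (S c) b * (1 - p ^ (c + b + 2)) = (1 - p ^ (S c)) * J c b.
Proof.
  induction b as [|b IH].
  - rewrite !J0. replace (c + 0 + 2)%nat with (S (S c)) by lia.
    destruct (plt1 (S c)) as [? ?]; [lia|]. destruct (plt1 (S (S c))) as [? ?]; [lia|].
    field. lra.
  - pose proof (Jrec (S c) b) as H1. pose proof (Jrec c b) as H2.
    rewrite <- pow_add in H1, H2.
    replace (S b + S (S c))%nat with (c + S b + 2)%nat in H1 by lia.
    replace (S b + S c)%nat with (c + b + 2)%nat in H2 by lia.
    destruct (plt1 (c + b + 2)) as [? ?]; [lia|].
    apply (Rmult_eq_reg_r (1 - p ^ (c + b + 2))); [|lra].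
    rewrite H1. rewrite Rmult_assoc, IH. rewrite Rmult_assoc, H2. ring.
Qed.
End RealPart.


Lemma RtoC_neq0 x : x <> 0 -> RtoC x <> RtoC 0.
Proof. intros H E. apply H. apply RtoC_inj. exact E. Qed.

Lemma cpow_RtoC x j : cpow (RtoC x) j = RtoC (x ^ j).
Proof.
  induction j as [|j IH]; simpl; [reflexivity|].
  rewrite IH, RtoC_mult. ring.
Qed.

Lemma qpoch_RtoC p t b : qpoch (RtoC (p * t)) p b = RtoC (rp p b t).
Proof.
  induction b as [|b IH]; simpl; [reflexivity|].
  rewrite IH. rewrite (RtoC_mult (rp p b t)). f_equal.
  rewrite RtoC_minus. f_equal. rewrite <- RtoC_mult. f_equal. ring.
Qed.

Lemma pnk_real N j p t :
  pnk N j p (RtoC (p * t)) = RtoC (qbinom N j p * (p * t) ^ j * rp p (N - j) t).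
Proof.
  unfold pnk. rewrite cpow_RtoC, qpoch_RtoC, !RtoC_mult. reflexivity.
Qed.

Lemma integral_eq p Q N j m :
  qintegral01 p (fun t => Cmult (pnk N j p (RtoC (p * t))) (em m (Q * t))) =
  RtoC ((1 - p) * (qbinom N j p * p ^ j * Q ^ m * J p (j + m) (N - j))).
Proof.
  unfold qintegral01.
  transitivity (Cmult (RtoC (1 - p))
     (RtoC (Series (fun i => (qbinom N j p * p ^ j * Q ^ m) * term p (j + m) (N - j) i)))).
  - f_equal. match goal with |- _ = RtoC ?x => change (RtoC x) with (x, 0) end. f_equal.
    + apply Series_ext. intros i. rewrite pnk_real. unfold em.
      rewrite <- RtoC_mult. simpl. unfold term.
      rewrite !Rpow_mult_distr, pow_add. ring.
    + rewrite (Series_ext _ (fun i => 0 * p ^ i)).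
      * rewrite Series_scal_l. ring.
      * intros i. rewrite pnk_real. unfold em. rewrite <- RtoC_mult. simpl. ring.
  - rewrite Series_scal_l. unfold J. rewrite <- RtoC_mult. reflexivity.
Qed.

Lemma cpow_shift q z k : cpow (Cmult (RtoC q) z) k = Cmult (RtoC (q ^ k)) (cpow z k).
Proof.
  induction k as [|k IH]; simpl; [ring|].
  rewrite IH, RtoC_mult. ring.
Qed.

Lemma qpoch_shift q z b :
  Cmult (Cminus (RtoC 1) z) (qpoch (Cmult (RtoC q) z) q b) =
  Cmult (qpoch z q b) (Cminus (RtoC 1) (Cmult (RtoC (q ^ b)) z)).
Proof.
  induction b as [|b IH]; simpl; [ring|].
  rewrite (RtoC_mult q (q ^ b)).
  transitivity (Cmult (Cmult (Cminus (RtoC 1) z) (qpoch (Cmult (RtoC q) z) q b))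
     (Cminus (RtoC 1) (Cmult (RtoC (q ^ b)) (Cmult (RtoC q) z)))); [ring|].
  rewrite IH. ring.
Qed.

Lemma qint_closed a q : q <> 1 -> qint a q = (q ^ a - 1) / (q - 1).
Proof.
  intros Hq. induction a as [|a IH]; simpl.
  - field. lra.
  - rewrite IH. field. lra.
Qed.

Lemma qint_add k m q : qint (k + m) q = qint m q + q ^ m * qint k q.
Proof.
  induction k as [|k IH]; simpl; [ring|].
  rewrite IH, pow_add. ring.
Qed.

Lemma pk_shift q n k z : (k <= n)%nat -> 1 < q ->
  Cmult (Cminus (RtoC 1) z) (Cminus (pnk n k q (Cmult (RtoC q) z)) (pnk n k q z)) =
  Cmult (Cmult (RtoC (q - 1)) (Cminus (RtoC (qint k q)) (Cmult (RtoC (qint n q)) z)))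
        (pnk n k q z).
Proof.
  intros Hk Hq. unfold pnk. rewrite cpow_shift.
  set (B := RtoC (qbinom n k q)). set (P := qpoch z q (n - k)).
  assert (H := qpoch_shift q z (n - k)). fold P in H.
  set (P' := qpoch (Cmult (RtoC q) z) q (n - k)) in *.
  assert (E1 : Cmult (RtoC (q - 1)) (RtoC (qint k q)) = Cminus (RtoC (q ^ k)) (RtoC 1)).
  { rewrite <- RtoC_mult, <- RtoC_minus. f_equal. rewrite qint_closed by lra. field. lra. }
  assert (E2 : Cmult (RtoC (q - 1)) (RtoC (qint n q)) =
               Cminus (Cmult (RtoC (q ^ k)) (RtoC (q ^ (n - k)))) (RtoC 1)).
  { rewrite <- !RtoC_mult, <- RtoC_minus. f_equal. rewrite <- pow_add.
    replace (k + (n - k))%nat with n by lia. rewrite qint_closed by lra. field. lra. }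
  transitivity (Cminus (Cmult (Cmult (Cmult B (RtoC (q ^ k))) (cpow z k))
                          (Cmult (Cminus (RtoC 1) z) P'))
                       (Cmult (Cmult (Cmult B (cpow z k)) P) (Cminus (RtoC 1) z))); [ring|].
  rewrite H.
  transitivity (Cmult (Cmult (Cmult B (cpow z k)) P)
    (Cminus (Cmult (RtoC (q - 1)) (RtoC (qint k q)))
            (Cmult (Cmult (RtoC (q - 1)) (RtoC (qint n q))) z))).
  - rewrite E1, E2. ring.
  - ring.
Qed.

Definition VC (n : nat) (f : nat -> C) : C :=
  Cplus (Cplus (f 0%nat) (f n)) (sum_n_m f 1 (n - 1)).

Lemma VC_ext n f g : (forall k, (k <= n)%nat -> f k = g k) -> VC n f = VC n g.
Proof.
  intros H. unfold VC. rewrite (H 0%nat), (H n) by lia.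
  rewrite (sum_n_m_ext_loc f g); [reflexivity|]. intros k Hk. apply H. lia.
Qed.

Lemma VC_plus n f g : VC n (fun k => Cplus (f k) (g k)) = Cplus (VC n f) (VC n g).
Proof.
  unfold VC.
  assert (H : sum_n_m (fun k => Cplus (f k) (g k)) 1 (n-1) =
     Cplus (sum_n_m f 1 (n-1)) (sum_n_m g 1 (n-1)))
    by exact (sum_n_m_plus (G:=C_AbelianMonoid) f g 1 (n-1)).
  rewrite H. ring.
Qed.

Lemma VC_scal n c f : VC n (fun k => Cmult c (f k)) = Cmult c (VC n f).
Proof.
  unfold VC.
  assert (H : sum_n_m (fun k => Cmult c (f k)) 1 (n-1) = Cmult c (sum_n_m f 1 (n-1)))
    by exact (sum_n_m_mult_l (K:=C_Ring) c f 1 (n-1)).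
  rewrite H. ring.
Qed.

Lemma VC_minus n f g : VC n (fun k => Cminus (f k) (g k)) = Cminus (VC n f) (VC n g).
Proof.
  transitivity (VC n (fun k => Cplus (f k) (Cmult (Copp (RtoC 1)) (g k)))).
  - apply VC_ext. intros. ring.
  - rewrite VC_plus, VC_scal. ring.
Qed.

Definition IG q n m k :=
  (1 - / q) * (qbinom (n - 2) (k - 1) (/ q) * (/ q) ^ (k - 1) *
     (powerRZ q (Z.of_nat k - Z.of_nat n)) ^ m * J (/ q) (k - 1 + m) (n - 2 - (k - 1))).

Definition Wt q n m k :=
  if Nat.eqb k 0 then 0 ^ m else if Nat.eqb k n then 1
  else qint (n - 1) (/ q) * q ^ (k - 1) * IG q n m k.

Lemma Unq_VC q n m z : (1 <= n)%nat ->
  Unq n q (em m) z = VC n (fun k => Cmult (RtoC (Wt q n m k)) (pnk n k q z)).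
Proof.
  intros Hn. unfold Unq, VC.
  assert (E0 : Wt q n m 0 = 0 ^ m) by reflexivity.
  assert (En : Wt q n m n = 1).
  { unfold Wt. destruct (Nat.eqb_spec n 0); [lia|]. rewrite Nat.eqb_refl. reflexivity. }
  rewrite E0, En. unfold em at 1 2. rewrite pow1.
  f_equal.
  rewrite <- (sum_n_m_mult_l (K:=C_Ring)).
  apply sum_n_m_ext_loc. intros k Hk.
  change (mult (RtoC (qint (n - 1) (/ q))) ?x) with (Cmult (RtoC (qint (n - 1) (/ q))) x).
  rewrite integral_eq.
  unfold Wt. destruct (Nat.eqb_spec k 0); [lia|]. destruct (Nat.eqb_spec k n); [lia|].
  unfold IG. rewrite !RtoC_mult. match goal with |- ?a = ?b => change (@eq C a b) end. ring.
Qed.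

Lemma Wt_ratio q n m k : 1 < q -> (1 <= n)%nat -> (k <= n)%nat ->
  Wt q n (S m) k * qint (n + m) q = Wt q n m k * qint (k + m) q.
Proof.
  intros Hq Hn Hk. unfold Wt.
  destruct (Nat.eqb_spec k 0) as [->|Hk0].
  { destruct m; simpl; ring. }
  destruct (Nat.eqb_spec k n) as [->|Hkn]; [ring|].
  unfold IG.
  set (p := / q).
  assert (Hp0 : 0 < p) by (unfold p; apply Rinv_0_lt_compat; lra).
  assert (Hp1 : p < 1) by (unfold p; rewrite <- Rinv_1; apply Rinv_lt_contravar; lra).
  set (c := (k - 1 + m)%nat). set (b := (n - 2 - (k - 1))%nat).
  replace (k - 1 + S m)%nat with (S c) by (unfold c; lia).
  set (Q := powerRZ q (Z.of_nat k - Z.of_nat n)).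
  assert (HQ : Q = / q ^ (n - k)).
  { unfold Q. replace (Z.of_nat k - Z.of_nat n)%Z with (- Z.of_nat (n - k))%Z by lia.
    rewrite powerRZ_neg', <- pow_powerRZ. reflexivity. }
  assert (HJ : J p (S c) b * (1 - p ^ (n + m)) = (1 - p ^ (k + m)) * J p c b).
  { pose proof (Jratio p Hp0 Hp1 c b) as H.
    replace (c + b + 2)%nat with (n + m)%nat in H by (unfold c, b; lia).
    replace (S c) with (k + m)%nat in H at 2 by (unfold c; lia). exact H. }
  assert (Hqa : forall a, 0 < q ^ a) by (intros; apply pow_lt; lra).
  assert (Hpn : p ^ (n + m) < 1) by (apply pow_lt_1_compat; [lra|lia]).
  assert (Hkey : Q * (1 - p ^ (k + m)) * qint (n + m) q = (1 - p ^ (n + m)) * qint (k + m) q).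
  { rewrite HQ. unfold p. rewrite !pow_inv, !qint_closed by lra.
    assert (E : q ^ (n + m) = q ^ (n - k) * q ^ (k + m)).
    { rewrite <- pow_add. f_equal. lia. }
    rewrite E. pose proof (Hqa (n - k)%nat). pose proof (Hqa (k + m)%nat).
    generalize dependent (q ^ (n - k)). generalize dependent (q ^ (k + m)).
    intros A HA D. intros.
    field. repeat split; try lra. }
  assert (H3 : Q * J p (S c) b * qint (n + m) q = J p c b * qint (k + m) q).
  { apply (Rmult_eq_reg_r (1 - p ^ (n + m))); [|lra].
    transitivity (Q * (J p (S c) b * (1 - p ^ (n + m))) * qint (n + m) q); [ring|].
    rewrite HJ.
    transitivity (J p c b * (Q * (1 - p ^ (k + m)) * qint (n + m) q)); [ring|].
    rewrite Hkey. ring. }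
  change (Q ^ S m) with (Q * Q ^ m). clearbody p c b Q.
  transitivity (qint (n - 1) p * q ^ (k - 1) * (1 - p) * qbinom (n - 2) (k - 1) p *
                p ^ (k - 1) * Q ^ m * (Q * J p (S c) b * qint (n + m) q)); [ring|].
  rewrite H3. ring.
Qed.

Definition U q n m z := VC n (fun k => Cmult (RtoC (Wt q n m k)) (pnk n k q z)).
Definition Sg q n m z :=
  VC n (fun k => Cmult (Cmult (RtoC (Wt q n m k)) (RtoC (qint k q))) (pnk n k q z)).

Lemma F1 q n m z : 1 < q -> (1 <= n)%nat ->
  Cmult (RtoC (qint (n + m) q)) (U q n (S m) z) =
  Cplus (Cmult (RtoC (qint m q)) (U q n m z)) (Cmult (RtoC (q ^ m)) (Sg q n m z)).
Proof.
  intros Hq Hn. unfold U, Sg. rewrite <- !VC_scal, <- VC_plus.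
  apply VC_ext. intros k Hk.
  transitivity (Cmult (RtoC (Wt q n (S m) k * qint (n + m) q)) (pnk n k q z)).
  { rewrite RtoC_mult. ring. }
  rewrite Wt_ratio by assumption. rewrite qint_add, !RtoC_mult, RtoC_plus, RtoC_mult. ring.
Qed.

Lemma F2 q n m z : 1 < q -> (1 <= n)%nat ->
  Cmult (RtoC (q - 1)) (Cminus (Sg q n m z) (Cmult (Cmult (RtoC (qint n q)) z) (U q n m z))) =
  Cmult (Cminus (RtoC 1) z) (Cminus (U q n m (Cmult (RtoC q) z)) (U q n m z)).
Proof.
  intros Hq Hn. unfold U, Sg. rewrite <- !VC_scal, <- !VC_minus, <- !VC_scal.
  apply VC_ext. intros k Hk.
  transitivity (Cmult (RtoC (Wt q n m k))
     (Cmult (Cminus (RtoC 1) z) (Cminus (pnk n k q (Cmult (RtoC q) z)) (pnk n k q z)))).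
  - rewrite pk_shift by assumption. ring.
  - ring.
Qed.

Theorem mainTheorem7 (q : R) (hq : 1 < q) (m n : nat) (hn : (1 <= n)%nat) (z : C) :
  Unq n q (em (S m)) z =
  Cplus
    (Cmult (Cdiv (Cmult (Cmult (RtoC (q ^ m)) z) (Cminus (RtoC 1) z))
                 (RtoC (qint (n + m) q)))
           (Dq q (Unq n q (em m)) z))
    (Cmult (Cdiv (Cplus (Cmult (RtoC (q ^ m * qint n q)) z) (RtoC (qint m q)))
                 (RtoC (qint (n + m) q)))
           (Unq n q (em m) z)).
Proof.
  assert (HN : RtoC (qint (n + m) q) <> RtoC 0).
  { apply RtoC_neq0. rewrite qint_closed by lra.
    assert (1 < q ^ (n + m)) by (apply Rlt_pow_R1; [lra|lia]).
    apply Rgt_not_eq. apply Rdiv_lt_0_compat; lra. }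
  assert (Hq1 : RtoC (q - 1) <> RtoC 0) by (apply RtoC_neq0; lra).
  pose proof (F1 q n m z hq hn) as H1.
  pose proof (F2 q n m z hq hn) as H2.
  assert (HS : Sg q n m z = Cplus (Cdiv (Cmult (Cminus (RtoC 1) z)
        (Cminus (U q n m (Cmult (RtoC q) z)) (U q n m z))) (RtoC (q - 1)))
        (Cmult (Cmult (RtoC (qint n q)) z) (U q n m z))).
  { rewrite <- H2. field. exact Hq1. }
  assert (HU : U q n (S m) z = Cdiv (Cplus (Cmult (RtoC (qint m q)) (U q n m z))
                  (Cmult (RtoC (q ^ m)) (Sg q n m z))) (RtoC (qint (n + m) q))).
  { rewrite <- H1. field. exact HN. }
  unfold Dq. rewrite !Unq_VC by exact hn. fold (U q n (S m) z). fold (U q n m z).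
  match goal with |- context [if ?c then _ else _] => destruct c as [Hz|Hz] end.
  - subst z. rewrite Cmult_0_r in HS.
    rewrite HU, HS. rewrite RtoC_mult. field. split; assumption.
  - change (fun z0 => VC n (fun k => Cmult (RtoC (Wt q n m k)) (pnk n k q z0)))
      with (U q n m).
    rewrite HU, HS. rewrite RtoC_mult. fold (U q n m (Cmult (RtoC q) z)). field. repeat split; assumption.
Qed.
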